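(* Let $t$ and $\Delta_s$ be positive integers and let $G$ be an undirected graph. There exists a $(t\cdot\Delta_s,\Delta_s)$-dissolution for $G$ if and only if $G$ has a $t$-star partition.
   Context: For $V'\subseteq V(G)$ let $Z(V',G):=\{(x,y)\mid x\in V',\ y\in V(G)\setminus V',\ \{x,y\}\in E(G)\}$. For positive integers $s,\Delta_s$, an $(s,\Delta_s)$-dissolution for $G$ is a pair $(D,z)$ with $D\subset V(G)$ and $z\colon Z(D,G)\to\{0,\dots,s\}$ such that (a) each $v'\in D$ satisfies $\sum_{(v',v)\in Z(D,G)} z(v',v)=s$, and (b) each $v\in V(G)\setminus D$ satisfies $\sum_{(v',v)\in Z(D,G)} z(v',v)=\Delta_s$. A $t$-star $K_{1,t}$ is the graph with vertices $v_1,\dots,v_{t+1}$ and edges $\{v_1,v_i\}$, $2\le i\le t+1$. A $t$-star partition of $G$ is a partition of $V(G)$ into sets $V_1,\dots,V_{|V(G)|/(t+1)}$ of size $t+1$ such that each induced subgraph $G[V_i]$ contains a $t$-star as a subgraph. *)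

(* Defs.v *)
From mathcomp Require Import all_boot.
Set Implicit Arguments. Unset Strict Implicit. Unset Printing Implicit Defensive.

Definition simple_graph (T : finType) (e : rel T) : Prop :=
  symmetric e /\ irreflexive e.

Definition Zset (T : finType) (e : rel T) (D : {set T}) : {set T * T} :=
  [set p : T * T | [&& p.1 \in D, p.2 \notin D & e p.1 p.2]].

(* (s,Ds)-dissolution (D,z); z is a function on pairs, only its values on
   Z(D,G) matter, and those must lie in {0,...,s}. *)
Definition dissolution (T : finType) (e : rel T) (s Ds : nat)
    (D : {set T}) (z : T * T -> nat) : Prop :=
  [/\ (forall p, p \in Zset e D -> z p <= s),
      (forall v, v \in D -> \sum_(p in Zset e D | p.1 == v) z p = s)
    & (forall v, v \notin D -> \sum_(p in Zset e D | p.2 == v) z p = Ds)].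

(* G[B] contains a t-star as a subgraph (B has exactly t+1 vertices):
   some vertex c of B is adjacent to every other vertex of B. *)
Definition contains_star (T : finType) (e : rel T) (B : {set T}) : Prop :=
  exists2 c, c \in B & forall v, v \in B -> v != c -> e c v.

Definition star_partition (T : finType) (e : rel T) (t : nat)
    (P : {set {set T}}) : Prop :=
  [/\ partition P [set: T],
      (forall B, B \in P -> #|B| = t.+1)
    & (forall B, B \in P -> contains_star e B)].

(* Main.v *)
Require Import Defs.
From mathcomp Require Import all_boot zify.
Set Implicit Arguments. Unset Strict Implicit. Unset Printing Implicit Defensive.

Definition nbr (X Y : finType) (r : X -> Y -> bool) (S : {set X}) : {set Y} :=
  [set y | [exists x in S, r x y]].

Lemma hall (X Y : finType) (y0 : Y) n : forall (r : X -> Y -> bool) (A : {set X}),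
  #|A| <= n -> (forall S : {set X}, S \subset A -> #|S| <= #|nbr r S|) ->
  exists f : X -> Y, {in A &, injective f} /\ (forall x, x \in A -> r x (f x)).
Proof.
elim: n => [|n IH] r A hA hH.
  have A0 : A = set0 by apply/eqP; rewrite -cards_eq0 -leqn0.
  by exists (fun _ => y0); split; move=> x; rewrite A0 inE.
case: (boolP [exists S : {set X}, [&& S != set0, S \proper A & #|nbr r S| <= #|S|]]).
  move/existsP=> [S /and3P [Sn0 SA tight]].
  have SsA : S \subset A := proper_sub SA.
  have [f1 [inj1 r1]] : exists f : X -> Y, {in S &, injective f} /\ (forall x, x \in S -> r x (f x)).
    apply: IH.
      by have := proper_card SA; move: hA; clear; lia.
    by move=> S1 S1S; apply: hH; apply: subset_trans S1S SsA.
  set r2 := fun x y => r x y && (y \notin nbr r S).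
  have [f2 [inj2 r2f]] : exists f : X -> Y, {in A :\: S &, injective f} /\ (forall x, x \in A :\: S -> r2 x (f x)).
    apply: IH.
      have := cardsID S A; rewrite (setIidPr SsA).
      have : 0 < #|S| by rewrite card_gt0.
      move: hA; clear; lia.
    move=> S2 S2A.
    have SU : S :|: S2 \subset A by rewrite subUset SsA (subset_trans S2A (subsetDl A S)).
    have HU := hH (S :|: S2) SU.
    have hsub : nbr r (S :|: S2) \subset nbr r S :|: nbr r2 S2.
      apply/subsetP=> y; rewrite in_setU [y \in nbr r _]inE => /existsP [x /andP [xU rxy]].
      case: (boolP (y \in nbr r S)) => //= yN.
      rewrite inE; apply/existsP; exists x; rewrite /r2 rxy yN andbT.
      move: xU; rewrite in_setU andbT => /orP [xS|] //.
      by case/negP: yN; rewrite inE; apply/existsP; exists x; rewrite xS.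
    have c1 := subset_leq_card hsub.
    have c2 := (leq_card_setU (nbr r S) (nbr r2 S2)).1.
    have c0 : #|S :&: S2| = 0.
      apply/eqP; rewrite cards_eq0; apply/eqP/setP => x; rewrite !inE.
      case xS: (x \in S) => //=; apply/negP => xS2.
      by have := subsetP S2A x xS2; rewrite !inE xS.
    have c3 := cardsU S S2; rewrite c0 in c3.
    move: HU c1 c2 c3 tight; clear; lia.
  exists (fun x => if x \in S then f1 x else f2 x); split.
    have inN x : x \in S -> f1 x \in nbr r S.
      by move=> xS; rewrite inE; apply/existsP; exists x; rewrite xS r1.
    have outN x : x \in A -> x \notin S -> f2 x \notin nbr r S.
      move=> xA xS; have h : x \in A :\: S by rewrite in_setD xS xA.
      by have /andP [_ ->] := r2f x h.
    move=> x1 x2 x1A x2A /=.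
    case: (boolP (x1 \in S)) => h1; case: (boolP (x2 \in S)) => h2.
    - exact: inj1.
    - by move=> E; have := outN x2 x2A h2; rewrite -E inN.
    - by move=> E; have := outN x1 x1A h1; rewrite E inN.
    - by apply: inj2; rewrite in_setD ?h1 ?h2 ?x1A ?x2A.
  move=> x xA; case: ifP=> xS; first by apply: r1.
  have h : x \in A :\: S by rewrite in_setD xS xA.
  by have /andP [] := r2f x h.
rewrite negb_exists => /forallP hN.
case: (set_0Vmem A) => [A0|[x0 x0A]].
  by exists (fun _ => y0); split; move=> x; rewrite A0 inE.
have : 0 < #|nbr r [set x0]| by have := hH [set x0]; rewrite sub1set x0A cards1; apply.
rewrite card_gt0 => /set0Pn [y1]; rewrite inE => /existsP [x']; rewrite inE => /andP [/eqP -> rxy1].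
set r2 := fun x y => r x y && (y != y1).
have [f2 [inj2 r2f]] : exists f : X -> Y, {in A :\ x0 &, injective f} /\ (forall x, x \in A :\ x0 -> r2 x (f x)).
  apply: IH.
    by have := cardsD1 x0 A; rewrite x0A; move: hA; clear; lia.
  move=> S2 S2A.
  case: (set_0Vmem S2) => [->|[x S2x]]; first by rewrite cards0.
  have prop : S2 \proper A.
    apply/properP; split; first exact: subset_trans S2A (subD1set A x0).
    exists x0 => //; apply/negP => h; have := subsetP S2A x0 h; rewrite !inE eqxx.
    by [].
  have S2n0 : S2 != set0 by apply/set0Pn; exists x.
  have := hN S2; rewrite prop S2n0 /= -ltnNge => lt.
  have hsub : nbr r S2 \subset y1 |: nbr r2 S2.
    apply/subsetP=> y; rewrite in_setU1 [y \in nbr r _]inE => /existsP [z /andP [zS rzy]].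
    case: (eqVneq y y1) => //= yy1.
    by rewrite inE; apply/existsP; exists z; rewrite zS /r2 rzy yy1.
  have c1 := subset_leq_card hsub.
  have c2 := cardsU1 y1 (nbr r2 S2).
  have c3 : (y1 \notin nbr r2 S2) <= 1 := leq_b1 _.
  move: c1 c2 c3 lt; clear; lia.
exists (fun x => if x == x0 then y1 else f2 x); split.
  have ne x : x \in A -> x != x0 -> f2 x != y1.
    move=> xA xx0; have h : x \in A :\ x0 by rewrite in_setD1 xx0 xA.
    by have /andP [_ ->] := r2f x h.
  move=> x1 x2 x1A x2A /=.
  case: (eqVneq x1 x0) => h1; case: (eqVneq x2 x0) => h2.
  - by rewrite h1 h2.
  - by move=> E; have := ne x2 x2A h2; rewrite -E eqxx.
  - by move=> E; have := ne x1 x1A h1; rewrite E eqxx.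
  - by apply: inj2; rewrite in_setD1 ?h1 ?h2 ?x1A ?x2A.
move=> x xA; case: eqP=> [->|xx0] //.
have h : x \in A :\ x0 by rewrite in_setD1 xA andbT; apply/eqP.
by have /andP [] := r2f x h.
Qed.
Lemma sum_fst (T : finType) (Q : pred (T*T)) (F : T*T -> nat) v :
  \sum_(p | Q p && (p.1 == v)) F p = \sum_(y | Q (v,y)) F (v,y).
Proof.
rewrite (reindex_onto (fun y => (v,y)) snd) /=; last by case=> a b /= /andP [_ /eqP ->].
by apply: eq_bigl => y; rewrite !eqxx !andbT.
Qed.

Lemma sum_snd (T : finType) (Q : pred (T*T)) (F : T*T -> nat) v :
  \sum_(p | Q p && (p.2 == v)) F p = \sum_(x | Q (x,v)) F (x,v).
Proof.
rewrite (reindex_onto (fun x => (x,v)) fst) /=; last by case=> a b /= /andP [_ /eqP ->].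
by apply: eq_bigl => y; rewrite !eqxx !andbT.
Qed.

Lemma dir2 (T : finType) (e : rel T) (t Ds : nat) :
  0 < t -> 0 < Ds ->
  (exists P : {set {set T}}, star_partition e t P) ->
  (exists (D : {set T}) (z : T * T -> nat), dissolution e (t * Ds) Ds D z).
Proof.
move=> t0 Ds0 [P [partP sizeP starP]].
have [/eqP covP trivP _] := and3P partP.
have inc x : x \in cover P by rewrite covP inE.
pose isc (B : {set T}) c := [forall v in B, (v != c) ==> e c v].
pose cen x := if [pick c in pblock P x | isc (pblock P x) c] is Some c then c else x.
have nonone x : [pick c in pblock P x | isc (pblock P x) c] != None.
  have [c cB Hc] := starP _ (pblock_mem (inc x)).
  case: pickP => // none; have := none c; rewrite cB /=.
  suff -> : isc (pblock P x) c by [].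
  by apply/forallP => v; apply/implyP => vB; apply/implyP => vc; exact: Hc.
have cenP x : cen x \in pblock P x /\ forall v, v \in pblock P x -> v != cen x -> e (cen x) v.
  move: (nonone x); rewrite /cen; case: pickP => [c /andP [cB /forallP H]|] //= _.
  by split => // v vB vc; have := H v; rewrite vB vc.
have cen_pb x y : pblock P x = pblock P y -> cen x = cen y.
  by move=> H; move: (nonone x); rewrite /cen H; case: pickP.
have blk x : pblock P (cen x) = pblock P x := same_pblock trivP (cenP x).1.
have cc x : cen (cen x) = cen x by apply: cen_pb; rewrite blk.
have xin x : x \in pblock P x by rewrite mem_pblock.
pose D := [set x | cen x == x].
pose z := fun p : T * T => if cen p.2 == p.1 then Ds else 0.
exists D, z; split.
- move=> p _; rewrite /z; case: ifP => // _; exact: leq_pmull.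
- move=> v; rewrite inE => /eqP vD; rewrite sum_fst /z /= -big_mkcondr.
  rewrite (eq_bigl (mem (pblock P v :\ v))); last first.
    move=> y; rewrite /= !inE /= vD eqxx /=.
    apply/idP/idP.
      move=> /andP [/andP [yD _] /eqP cy].
      have : y \in pblock P v by rewrite -cy blk xin.
      by move=> ->; rewrite andbT; apply: contra yD => /eqP ->; rewrite vD.
    move=> /andP [yv yB].
    have cy : cen y = v by rewrite -vD; apply: cen_pb; rewrite (same_pblock trivP yB).
    rewrite cy eqxx andbT eq_sym yv /=.
    by have := (cenP v).2 y yB; rewrite vD; apply.
  rewrite sum_nat_const.
  have := cardsD1 v (pblock P v); rewrite xin sizeP ?pblock_mem //.
  lia.
- move=> v; rewrite inE => vD; rewrite sum_snd /z /= -big_mkcondr.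
  rewrite (eq_bigl (fun x => x == cen v)); last first.
    move=> x /=; rewrite eq_sym; case: eqP => [->|]; rewrite ?andbT ?andbF //.
    rewrite !inE /= cc eqxx vD /=.
    by apply: (cenP v).2 => //; rewrite eq_sym.
  by rewrite big_pred1_eq.
Qed.
Lemma dir1 (T : finType) (e : rel T) (t Ds : nat) :
  0 < t -> 0 < Ds ->
  (exists (D : {set T}) (z : T * T -> nat), dissolution e (t * Ds) Ds D z) ->
  (exists P : {set {set T}}, star_partition e t P).
Proof.
move=> t0 Ds0 [D [z [zle zD zN]]].
case: (pickP (fun _ : T => true)) => [y0 _ | T0]; last first.
  exists (preim_partition id [set: T]); split; first exact: preim_partitionP.
    by move=> B /imsetP [x]; have := T0 x.
  by move=> B /imsetP [x]; have := T0 x.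
pose Z := Zset e D.
pose A := setX D [set: 'I_t].
pose r := fun (p : T * 'I_t) y => [&& e p.1 y, y \notin D & 0 < z (p.1, y)].
have sumL (S' : {set T}) : S' \subset D ->
    \sum_(p in Z | p.1 \in S') z p = #|S'| * (t * Ds).
  move=> S'D; rewrite (partition_big (fun p : T * T => p.1) (fun v => v \in S')); last first.
    by move=> p /andP [].
  rewrite -sum_nat_const; apply: eq_bigr => j jS.
  rewrite -(zD j (subsetP S'D j jS)); apply: eq_bigl => p.
  by case: eqP => [->|]; rewrite ?jS ?andbT ?andbF.
have sumR (N : {set T}) : N \subset ~: D ->
    \sum_(p in Z | p.2 \in N) z p = #|N| * Ds.
  move=> ND; rewrite (partition_big (fun p : T * T => p.2) (fun v => v \in N)); last first.
    by move=> p /andP [].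
  rewrite -sum_nat_const; apply: eq_bigr => j jN.
  have := subsetP ND j jN; rewrite inE => jD.
  rewrite -(zN j jD); apply: eq_bigl => p.
  by case: eqP => [->|]; rewrite ?jN ?andbT ?andbF.
have hallC : forall S : {set T * 'I_t}, S \subset A -> #|S| <= #|nbr r S|.
  move=> S SA; pose S' := [set p.1 | p in S].
  have c1 : #|S| <= #|S'| * t.
    have : S \subset setX S' [set: 'I_t].
      by apply/subsetP => -[a i] pS; rewrite in_setX inE andbT; exact: (imset_f (fun p : T * 'I_t => p.1) pS).
    by move/subset_leq_card; rewrite cardsX cardsT card_ord.
  have S'D : S' \subset D.
    apply/subsetP => a /imsetP [[b i] pS ->]; have := subsetP SA _ pS.
    by rewrite in_setX => /andP [].
  have ND : nbr r S \subset ~: D.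
    apply/subsetP => y; rewrite !inE => /existsP [p /andP [_ /and3P [_ ? _]]] //.
  have mid : \sum_(p in Z | p.1 \in S') z p <= \sum_(p in Z | p.2 \in nbr r S) z p.
    rewrite [X in X <= _]big_mkcond [X in _ <= X]big_mkcond; apply: leq_sum => -[a b] _ /=.
    case: (boolP (((a, b) \in Z) && (a \in S'))) => [/andP [pZ pS] | _] //.
    case: (posnP (z (a, b))) => [->|zp] //.
    have : ((a, b) \in Z) && (b \in nbr r S); last by move=> ->.
    rewrite pZ /=; move: pZ; rewrite inE /= => /and3P [aD bD eab].
    case/imsetP: pS => q qS qa.
    by rewrite inE; apply/existsP; exists q; rewrite qS /r -qa eab bD zp.
  rewrite sumL // sumR // mulnA leq_pmul2r // in mid.
  move: c1 mid; clear; lia.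
have [f [finj fr]] := @hall _ _ y0 #|A| r A (leqnn _) hallC.
have tot1 : \sum_(p in Z) z p = #|D| * (t * Ds).
  rewrite -sumL //; apply: eq_bigl => p; case pZ: (p \in Z) => //=.
  by move: pZ; rewrite inE => /and3P [].
have tot2 : \sum_(p in Z) z p = #|~: D| * Ds.
  rewrite -sumR //; apply: eq_bigl => p; case pZ: (p \in Z) => //=.
  by move: pZ; rewrite !inE => /and3P [].
have cardA : #|A| = #|D| * t by rewrite cardsX cardsT card_ord.
have imsub : f @: A \subset ~: D.
  by apply/subsetP => y /imsetP [p pA ->]; have /and3P [_ ? _] := fr p pA; rewrite inE.
have imA : f @: A = ~: D.
  apply/eqP; rewrite eqEcard imsub (card_in_imset finj) cardA.
  move: tot1; rewrite tot2 mulnA => /eqP; rewrite eqn_pmul2r // => /eqP ->.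
  by rewrite leqnn.
have fND p : p \in A -> f p \notin D.
  by move=> pA; have := subsetP imsub (f p) (imset_f _ pA); rewrite inE.
pose own x := if [pick p in A | f p == x] is Some p then p.1 else x.
have ownD x : x \in D -> own x = x.
  move=> xD; rewrite /own; case: pickP => [p /andP [pA /eqP fpx] | //].
  by have := fND p pA; rewrite fpx xD.
have own_f p : p \in A -> own (f p) = p.1.
  move=> pA; rewrite /own; case: pickP => [q /andP [qA /eqP fq] | none].
    by rewrite (finj q p qA pA fq).
  by have := none p; rewrite pA eqxx.
have ownIn x : own x \in D.
  case: (boolP (x \in D)) => xD; first by rewrite ownD.
  have : x \in f @: A by rewrite imA inE.
  case/imsetP => -[b i] pA ->; rewrite own_f //.
  by move: pA; rewrite in_setX => /andP [].
have aiA a i : a \in D -> (a, i) \in A by move=> aD; rewrite in_setX aD inE.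
have blockE a : a \in D ->
    [set y in [set: T] | a == own y] = a |: ((fun i => f (a, i)) @: [set: 'I_t]).
  move=> aD; apply/setP => y; rewrite !inE.
  case: (boolP (y \in D)) => yD.
    rewrite ownD // eq_sym.
    suff -> : (y \in (fun i => f (a, i)) @: [set: 'I_t]) = false by rewrite orbF.
    apply/negbTE/negP => /imsetP [i _ yE]; have := fND _ (aiA a i aD).
    by rewrite -yE yD.
  have : y \in f @: A by rewrite imA inE.
  case/imsetP => p pA ->; rewrite own_f //.
  have -> : (f p == a) = false.
    by apply/negbTE; apply: contra (fND p pA) => /eqP ->.
  rewrite /=; apply/idP/idP.
    move=> /eqP ->; apply/imsetP; exists p.2; first by rewrite inE.
    by case: p pA.
  case/imsetP => i _ E; have := finj _ _ pA (aiA a i aD) E.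
  by move=> ->; rewrite eqxx.
exists (preim_partition own [set: T]); split.
- exact: preim_partitionP.
- move=> B /imsetP [x _ ->]; rewrite blockE // cardsU1 card_imset; last first.
    by move=> i j /(finj _ _ (aiA _ i (ownIn x)) (aiA _ j (ownIn x))) [].
  rewrite cardsT card_ord.
  suff -> : own x \notin (fun i => f (own x, i)) @: [set: 'I_t] by [].
  apply/negP => /imsetP [i _ E]; have := fND _ (aiA _ i (ownIn x)).
  by rewrite -E ownIn.
- move=> B /imsetP [x _ ->]; rewrite blockE //; exists (own x); first by rewrite setU11.
  move=> v; rewrite in_setU1 => /orP [/eqP -> | ]; first by rewrite eqxx.
  case/imsetP => i _ -> _.
  by have /and3P [] := fr _ (aiA _ i (ownIn x)).
Qed.

Theorem proposition1 (T : finType) (e : rel T) (t Ds : nat) :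
  simple_graph e -> 0 < t -> 0 < Ds ->
  (exists (D : {set T}) (z : T * T -> nat), dissolution e (t * Ds) Ds D z) <->
  (exists P : {set {set T}}, star_partition e t P).
Proof.
move=> _ t0 Ds0; split; [exact: dir1 | exact: dir2].
Qed.
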